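(* Let $\mu>0$, $a\in\left(-\frac{2\mu}{9},0\right)\cup\left(0,\frac{4\mu}{9}\right)$, $\alpha_0\in\mathbb{C}$, and let $\mathcal{A}(\cdot\,;a):[\frac{2\mu}{3},\infty)\to[0,\infty)$ be measurable, not almost everywhere zero, with $\int_{2\mu/3}^{\infty}\frac{ds'}{s'}\mathcal{A}(s';a)|\beta_1(a,s')|<\infty$. For $|\tilde z|<1$ define $\mathcal{T}(\tilde z,a):=\alpha_0+\frac{1}{\pi}\int_{2\mu/3}^{\infty}\frac{ds'}{s'}\,\mathcal{A}(s';a)\,H(s',\tilde z;a)$, and $\alpha_1(a)a^2:=\frac1\pi\int_{2\mu/3}^\infty\frac{ds'}{s'}\mathcal{A}(s';a)\beta_1(a,s')$, and $f(\tilde z,a):=\dfrac{\mathcal{T}(\tilde z,a)-\alpha_0}{\alpha_1(a)a^2}$. Then (1) $|f(\tilde z,a)|\le\dfrac{|\tilde z|}{(1-|\tilde z|)^2}$ for all $|\tilde z|<1$; (2) $|f(\tilde z,a)|\ge\dfrac{|\tilde z|}{(1+|\tilde z|)^2}$ for all real $\tilde z$ with $|\tilde z|<1$.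
   Context: For real $a$ and $s_1>0$ the crossing symmetric kernel is $H(s_1,\tilde z;a)=\dfrac{27a^2\tilde z\,(2s_1-3a)}{27a^3\tilde z-27a^2\tilde z s_1-(1-\tilde z)^2s_1^3}$, and $\beta_1(a,s_1)=\frac{27a^2}{s_1^3}(3a-2s_1)$ is its first Taylor coefficient in $\tilde z$ at $\tilde z=0$. (Physically $\mathcal{T}$ is the crossing symmetric dispersive representation of a unitary $2\to2$ scalar amplitude with $\mu=4m^2$ and $\mathcal{A}\ge0$ its absorptive part.) *)

(* Defs.v *)
From HB Require Import structures.
From mathcomp Require Import all_boot all_order all_algebra.
From mathcomp Require Import all_classical all_reals all_analysis.
From mathcomp Require Import complex.
Set Implicit Arguments. Unset Strict Implicit. Unset Printing Implicit Defensive.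
Import Order.TTheory GRing.Theory Num.Theory.
Local Open Scope ring_scope.
Local Open Scope classical_set_scope.
Local Open Scope complex_scope.

Section Defs.
Variable R : realType.

Definition Hker (s1 : R) (z : R[i]) (a : R) : R[i] :=
  (27 * a ^+ 2)%:C * z * (2 * s1 - 3 * a)%:C /
  ((27 * a ^+ 3)%:C * z - (27 * a ^+ 2)%:C * z * s1%:C - (1 - z) ^+ 2 * (s1 ^+ 3)%:C).

Definition beta1 (a s1 : R) : R := 27 * a ^+ 2 / s1 ^+ 3 * (3 * a - 2 * s1).

Definition Cintegral (D : set R) (g : R -> R[i]) : R[i] :=
  (Rintegral lebesgue_measure D (fun x => complex.Re (g x)))%:C
  + 'i * (Rintegral lebesgue_measure D (fun x => complex.Im (g x)))%:C.

Definition Tamp (mu a : R) (alpha0 : R[i]) (A : R -> R) (z : R[i]) : R[i] :=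
  alpha0 + (pi^-1)%:C *
    Cintegral `[2 * mu / 3, +oo[ (fun s => (A s / s)%:C * Hker s z a).

Definition alpha1a2 (mu a : R) (A : R -> R) : R :=
  pi^-1 * Rintegral lebesgue_measure `[2 * mu / 3, +oo[ (fun s => A s / s * beta1 a s).

Definition fnorm (mu a : R) (alpha0 : R[i]) (A : R -> R) (z : R[i]) : R[i] :=
  (Tamp mu a alpha0 A z - alpha0) / (alpha1a2 mu a A)%:C.

End Defs.

(* Main.v *)
Require Import Defs.
From HB Require Import structures.
From mathcomp Require Import all_boot all_order all_algebra.
From mathcomp Require Import all_classical all_reals all_analysis.
From mathcomp Require Import complex.
From mathcomp Require Import ring lra measurable_realfun.
Import Order.TTheory GRing.Theory Num.Theory.
Local Open Scope ring_scope.
Local Open Scope classical_set_scope.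
Local Open Scope complex_scope.
Notation CRe := (@complex.Re _).
Notation CIm := (@complex.Im _).

Definition ccf {R : realType} (a s : R) : R := 1 - 27 * a ^+ 2 * (s - a) / (2 * s ^+ 3).
Definition Pf {R : realType} (x y c : R) : R := 1 - 2 * c * x + x ^+ 2 - y ^+ 2.
Definition Qf {R : realType} (x y c : R) : R := 2 * x * y - 2 * c * y.
Definition Nf {R : realType} (x y c : R) : R := Pf x y c ^+ 2 + Qf x y c ^+ 2.
Definition Uf {R : realType} (x y c : R) : R := (x * Pf x y c + y * Qf x y c) / Nf x y c.
Definition Vf {R : realType} (x y c : R) : R := (y * Pf x y c - x * Qf x y c) / Nf x y c.

Lemma ccf_range (R : realType) (mu a s : R) : 0 < mu ->
  ((- (2 * mu / 9) < a < 0) \/ (0 < a < 4 * mu / 9)) -> 2 * mu / 3 <= s ->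
  -1 <= ccf a s <= 1.
Proof.
move=> mu0 ha hs.
have s0 : 0 < s by lra.
have h1 : 0 < s + 3 * a by case: ha => /andP[? ?]; lra.
have h2 : 0 < s - a by case: ha => /andP[? ?]; lra.
have s3 : 0 < s ^+ 3 by rewrite exprn_gt0.
have key : ccf a s * (2 * s ^+ 3) = 2 * s ^+ 3 - 27 * a ^+ 2 * (s - a).
  by rewrite /ccf; field; rewrite gt_eqF.
have fac : 4 * s ^+ 3 - 27 * a ^+ 2 * (s - a) = (s + 3 * a) * (2 * s - 3 * a) ^+ 2
  by ring.
have e1 : 0 <= 27 * a ^+ 2 * (s - a) by apply: mulr_ge0; [apply: mulr_ge0 => //; exact: sqr_ge0| exact: ltW].
have e2 : 0 <= (s + 3 * a) * (2 * s - 3 * a) ^+ 2 by apply: mulr_ge0; [exact: ltW| exact: sqr_ge0].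
move: key fac e1 e2; set c := ccf a s; set K := s ^+ 3; set L := 27 * a ^+ 2 * (s - a).
move=> key fac e1 e2.
have k2 : 0 < 2 * K by rewrite mulr_gt0.
have q1 : 0 <= (1 - c) * (2 * K) by rewrite mulrBl mul1r key; lra.
have q2 : 0 <= (c + 1) * (2 * K) by rewrite mulrDl mul1r key; lra.
rewrite pmulr_lge0 // in q1; rewrite pmulr_lge0 // in q2.
apply/andP; split; lra.
Qed.

Lemma Nf_ge {R : realType} (x y c : R) : -1 <= c <= 1 -> x ^+ 2 + y ^+ 2 < 1 ->
  (1 - Num.sqrt (x ^+ 2 + y ^+ 2)) ^+ 4 <= Nf x y c.
Proof.
move=> /andP[c1 c2] hr.
set r := Num.sqrt _.
have r0 : 0 <= r by exact: sqrtr_ge0.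
have rr : r ^+ 2 = x ^+ 2 + y ^+ 2 by rewrite sqr_sqrtr // addr_ge0 ?sqr_ge0.
have r1 : r < 1.
  have : r ^+ 2 < 1 by rewrite rr.
  nra.
set w := Num.sqrt (1 - c ^+ 2).
have w0 : 0 <= w by exact: sqrtr_ge0.
have ww : w ^+ 2 = 1 - c ^+ 2 by rewrite sqr_sqrtr //; nra.
set S := x ^+ 2 - 2 * c * x + y ^+ 2 + 1.
have eN : Nf x y c = (S - 2 * y * w) * (S + 2 * y * w).
  have -> : (S - 2 * y * w) * (S + 2 * y * w) = S ^+ 2 - 4 * y ^+ 2 * w ^+ 2 by ring.
  by rewrite ww /Nf /Pf /Qf /S; ring.
have cs1 : (c * x + y * w) ^+ 2 <= r ^+ 2.
  have : (c * x + y * w) ^+ 2 + (c * y - x * w) ^+ 2 = (c ^+ 2 + w ^+ 2) * (x ^+ 2 + y ^+ 2) by ring.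
  rewrite ww rr => e; have : 0 <= (c * y - x * w) ^+ 2 by exact: sqr_ge0.
  lra.
have cs2 : (c * x - y * w) ^+ 2 <= r ^+ 2.
  have : (c * x - y * w) ^+ 2 + (c * y + x * w) ^+ 2 = (c ^+ 2 + w ^+ 2) * (x ^+ 2 + y ^+ 2) by ring.
  rewrite ww rr => e; have : 0 <= (c * y + x * w) ^+ 2 by exact: sqr_ge0.
  lra.
have l1 : c * x + y * w <= r by nra.
have l2 : c * x - y * w <= r by nra.
have f1 : (1 - r) ^+ 2 <= S - 2 * y * w.
  have -> : S - 2 * y * w = r ^+ 2 + 1 - 2 * (c * x + y * w) by rewrite rr /S; ring.
  nra.
have f2 : (1 - r) ^+ 2 <= S + 2 * y * w.
  have -> : S + 2 * y * w = r ^+ 2 + 1 - 2 * (c * x - y * w) by rewrite rr /S; ring.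
  nra.
rewrite eN (_ : (1 - r) ^+ 4 = (1 - r) ^+ 2 * (1 - r) ^+ 2); last by ring.
apply: ler_pM => //; exact: sqr_ge0.
Qed.

Lemma UV_sq {R : realType} (x y c : R) : Nf x y c != 0 ->
  Uf x y c ^+ 2 + Vf x y c ^+ 2 = (x ^+ 2 + y ^+ 2) / Nf x y c.
Proof.
move=> hN; rewrite /Uf /Vf.
move: hN; rewrite /Nf; set P := Pf x y c; set Q := Qf x y c => hN.
by field.
Qed.

Lemma UV_bound {R : realType} (x y c : R) : -1 <= c <= 1 -> x ^+ 2 + y ^+ 2 < 1 ->
  Uf x y c ^+ 2 + Vf x y c ^+ 2 <=
  (Num.sqrt (x ^+ 2 + y ^+ 2) / (1 - Num.sqrt (x ^+ 2 + y ^+ 2)) ^+ 2) ^+ 2.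
Proof.
move=> hc hr.
have hN := Nf_ge x y c hc hr.
set r := Num.sqrt _ in hN *.
have r0 : 0 <= r by exact: sqrtr_ge0.
have rr : r ^+ 2 = x ^+ 2 + y ^+ 2 by rewrite sqr_sqrtr // addr_ge0 ?sqr_ge0.
have r1 : r < 1.
  have : r ^+ 2 < 1 by rewrite rr.
  nra.
have d0 : 0 < (1 - r) ^+ 4 by rewrite exprn_gt0 // subr_gt0.
have N0 : 0 < Nf x y c by exact: lt_le_trans hN.
rewrite UV_sq ?gt_eqF // -rr expr_div_n -exprM /=.
apply: ler_wpM2l; first exact: sqr_ge0.
by rewrite lef_pV2 // posrE.
Qed.

Lemma Hker_eq {R : realType} (a s x y : R) : 0 < s -> Nf x y (ccf a s) != 0 ->
  Hker s (x +i* y) a = (beta1 a s)%:C * (Uf x y (ccf a s) +i* Vf x y (ccf a s)).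
Proof.
move=> s0 hN.
have sn0 : s != 0 by rewrite gt_eqF.
have key : ccf a s * (2 * s ^+ 3) = 2 * s ^+ 3 - 27 * a ^+ 2 * (s - a).
  by rewrite /ccf; field.
move: hN key; set c := ccf a s => hN key.
have hc : 27 * a ^+ 3 = 27 * a ^+ 2 * s - 2 * s ^+ 3 * (1 - c).
  by rewrite mulrBr mulr1 [_ * c]mulrC key; ring.
have eD : (27 * a ^+ 3)%:C * (x +i* y) - (27 * a ^+ 2)%:C * (x +i* y) * s%:C
    - (1 - (x +i* y)) ^+ 2 * (s ^+ 3)%:C
    = (- s ^+ 3)%:C * (Pf x y c +i* Qf x y c).
  apply/eqP; rewrite eq_complex /= hc /Pf /Qf; apply/andP; split; apply/eqP; ring.
move: hN; rewrite /Nf /Uf /Vf; set P := Pf x y c; set Q := Qf x y c => hN.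
have eUV : (((x * P + y * Q) / (P ^+ 2 + Q ^+ 2)) +i* ((y * P - x * Q) / (P ^+ 2 + Q ^+ 2)))
    * (P +i* Q) = x +i* y.
  apply/eqP; rewrite eq_complex /=; apply/andP; split; apply/eqP; by field.
have eN : (27 * a ^+ 2)%:C * (x +i* y) * (2 * s - 3 * a)%:C
    = (beta1 a s)%:C * (- s ^+ 3)%:C * (x +i* y).
  apply/eqP; rewrite eq_complex /= /beta1; apply/andP; split; apply/eqP; by field.
have PQ0 : (P +i* Q) != 0.
  apply/eqP => h; move: hN.
  have := congr1 CRe h; have := congr1 CIm h; rewrite /= => -> ->.
  by rewrite expr0n /= addr0 eqxx.
have K0 : (- s ^+ 3)%:C != 0 :> R[i].
  apply/eqP => h; have := congr1 CRe h; rewrite /= => /eqP.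
  by rewrite oppr_eq0 expf_eq0 (negbTE sn0) andbF.
rewrite /Hker eD eN -{1}eUV; field.
rewrite PQ0 /=; apply/eqP => h; move: sn0; have := congr1 CRe h; rewrite /= => ->.
by rewrite eqxx.
Qed.

Lemma measurable_inv {R : realType} : measurable_fun [set: R] (@GRing.inv R).
Proof.
have -> : [set: R] = [set x : R | x != 0] `|` [set 0].
  apply/seteqP; split => x //= _; case: (eqVneq x 0) => h; by [right|left].
apply/measurable_funU.
- apply: open_measurable; exact: open_neq.
- exact: measurable_set1.
split; last exact: measurable_fun_set1.
apply: open_continuous_measurable_fun; first exact: open_neq.
move=> x; rewrite inE /= => hx; exact: inv_continuous.
Qed.

Ltac mfun := repeat first
  [ exact: measurable_cst
  | exact: measurable_id
  | apply: measurable_funD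
  | apply: measurable_funB
  | apply: measurable_funM
  | apply: measurable_funN
  | apply: measurable_funX
  | apply: (measurableT_comp measurable_inv) ].

Lemma measurable_ccf {R : realType} (a : R) : measurable_fun [set: R] (ccf a).
Proof. rewrite /ccf; mfun. Qed.

Lemma measurable_Uf {R : realType} (x y : R) : measurable_fun [set: R] (Uf x y).
Proof. rewrite /Uf /Nf /Pf /Qf; mfun. Qed.

Lemma measurable_Vf {R : realType} (x y : R) : measurable_fun [set: R] (Vf x y).
Proof. rewrite /Vf /Nf /Pf /Qf; mfun. Qed.

Lemma measurable_beta1 {R : realType} (a : R) : measurable_fun [set: R] (beta1 a).
Proof. rewrite /beta1; mfun. Qed.

Lemma normC_real {R : realType} (r : R) : `|r%:C| = `|r|%:C :> R[i].
Proof. by rewrite normc_def /= expr0n /= addr0 sqrtr_sqr. Qed.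

Lemma normC_pq {R : realType} (p q : R) :
  `|p%:C + 'i * q%:C| = (Num.sqrt (p ^+ 2 + q ^+ 2))%:C :> R[i].
Proof.
have -> : p%:C + 'i * q%:C = p +i* q :> R[i].
  apply/eqP; rewrite eq_complex /=; apply/andP; split; apply/eqP; ring.
by rewrite normc_def.
Qed.

Lemma iZ {R : realType} (b : R) (f : R -> R) (k : R) :
  lebesgue_measure.-integrable `[b, +oo[ (EFin \o f) ->
  lebesgue_measure.-integrable `[b, +oo[ (EFin \o (fun s => k * f s)).
Proof.
move=> h.
apply: (eq_integrable _ _ _ _ (integrableZl _ k h)).
- exact: measurable_itv.
- move=> s _ /=; by rewrite EFinM.
- exact: measurable_itv.
Qed.

Lemma iDR {R : realType} (b : R) (f g : R -> R) :
  lebesgue_measure.-integrable `[b, +oo[ (EFin \o f) ->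
  lebesgue_measure.-integrable `[b, +oo[ (EFin \o g) ->
  lebesgue_measure.-integrable `[b, +oo[ (EFin \o (fun s => f s + g s)).
Proof.
move=> hf hg.
apply: (eq_integrable _ _ _ _ (integrableD _ hf hg)).
- exact: measurable_itv.
- by move=> s _ /=.
- exact: measurable_itv.
Qed.

Lemma pw_bound {R : realType} (p q u v m w : R) : 0 <= w -> 0 <= m ->
  u ^+ 2 + v ^+ 2 <= m ^+ 2 ->
  p * (- w * u) + q * (- w * v) <= Num.sqrt (p ^+ 2 + q ^+ 2) * m * w.
Proof.
move=> w0 m0 huv.
set S := Num.sqrt _.
have S0 : 0 <= S by exact: sqrtr_ge0.
have SS : S ^+ 2 = p ^+ 2 + q ^+ 2 by rewrite sqr_sqrtr // addr_ge0 ?sqr_ge0.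
have cs : (p * u + q * v) ^+ 2 <= (S * m) ^+ 2.
  have e : (p * u + q * v) ^+ 2 + (p * v - q * u) ^+ 2 = (p ^+ 2 + q ^+ 2) * (u ^+ 2 + v ^+ 2) by ring.
  have : 0 <= (p * v - q * u) ^+ 2 by exact: sqr_ge0.
  have : (p ^+ 2 + q ^+ 2) * (u ^+ 2 + v ^+ 2) <= S ^+ 2 * m ^+ 2.
    by rewrite SS ler_wpM2l // addr_ge0 ?sqr_ge0.
  rewrite exprMn; lra.
have Sm0 : 0 <= S * m by exact: mulr_ge0.
have h : - (p * u + q * v) <= S * m by nra.
nra.
Qed.

Lemma U_lower {R : realType} (t c : R) : -1 <= c <= 1 -> `|t| < 1 ->
  `|t| / (1 + `|t|) ^+ 2 <= (if 0 <= t then 1 else -1) * Uf t 0 c.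
Proof.
move=> /andP[c1 c2] ht.
have [t1 t2] : -1 < t /\ t < 1 by move: ht; rewrite ltr_norml => /andP[].
set P := 1 - 2 * c * t + t ^+ 2.
have P0 : 0 < P.
  case: (leP 0 t) => h0.
    have : 0 <= t * (1 - c) by apply: mulr_ge0; lra.
    have : 0 < (1 - t) ^+ 2 by rewrite exprn_gt0 // subr_gt0.
    rewrite /P; nra.
  have : 0 <= - t * (1 + c) by apply: mulr_ge0; lra.
  have : 0 < (1 + t) ^+ 2 by rewrite exprn_gt0 //; lra.
  rewrite /P; nra.
have hU : Uf t 0 c = t / P.
  rewrite /Uf /Nf /Pf /Qf -/P; rewrite !(mulr0, mul0r, expr0n) /= !(subr0, addr0).
  by field; rewrite gt_eqF.
rewrite hU.
have K0 : 0 < (1 + `|t|) ^+ 2 by rewrite exprn_gt0 // ltr_pwDl // normr_ge0.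
case: (leP 0 t) => ht0.
- rewrite mul1r; rewrite ger0_norm // in K0 *.
  apply: ler_wpM2l => //; rewrite lef_pV2 ?posrE //.
  have : 0 <= t * (1 + c) by apply: mulr_ge0; lra.
  rewrite /P; nra.
- rewrite mulN1r -mulNr; rewrite ltr0_norm // in K0 *.
  apply: ler_wpM2l; first lra.
  rewrite lef_pV2 ?posrE //.
  have : 0 <= - t * (1 - c) by apply: mulr_ge0; lra.
  rewrite /P; nra.
Qed.

Lemma abs_le_sq {R : realType} (u m : R) : 0 <= m -> u ^+ 2 <= m ^+ 2 -> `|u| <= m.
Proof. move=> m0 h; rewrite ler_norml; apply/andP; split; nra. Qed.

Theorem mainTheorem8 (R : realType) (mu a : R) (alpha0 : R[i]) (A : R -> R) :
  0 < mu ->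
  ((- (2 * mu / 9) < a < 0) \/ (0 < a < 4 * mu / 9)) ->
  measurable_fun `[2 * mu / 3, +oo[ A ->
  (forall s, 2 * mu / 3 <= s -> 0 <= A s) ->
  ~ {ae lebesgue_measure, forall s, `[2 * mu / 3, +oo[ s -> A s = 0} ->
  (\int[lebesgue_measure]_(s in `[(2 * mu / 3)%R, +oo[) (A s / s * `|beta1 a s|)%:E < +oo)%E ->
  (forall z : R[i], `|z| < 1 ->
     `|fnorm mu a alpha0 A z| <= `|z| / (1 - `|z|) ^+ 2) /\
  (forall t : R, `|t| < 1 ->
     `|t%:C| / (1 + `|t%:C|) ^+ 2 <= `|fnorm mu a alpha0 A t%:C|).
Proof.
move=> mu0 ha mA A0 Anz Aint.
have hD : forall s, `[2 * mu / 3, +oo[ s -> 2 * mu / 3 <= s.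
  by move=> s; rewrite /= in_itv /= andbT.
have Dpos : forall s, `[2 * mu / 3, +oo[ s -> 0 < s.
  by move=> s /hD hs; lra.
have a0 : a != 0 by case: ha => /andP[? ?]; apply/eqP; lra.
have hb1 : forall s, `[2 * mu / 3, +oo[ s -> beta1 a s < 0.
  move=> s Ds; have s0 := Dpos s Ds; have hs := hD s Ds.
  rewrite /beta1 pmulr_rlt0; first by case: ha => /andP[? ?]; lra.
  by rewrite divr_gt0 ?exprn_gt0 // mulr_gt0 // exprn_even_gt0 //.
have hcc : forall s, `[2 * mu / 3, +oo[ s -> -1 <= ccf a s <= 1.
  by move=> s /hD; exact: ccf_range.
pose w := fun s => A s / s * `|beta1 a s|.
have w0 : forall s, `[2 * mu / 3, +oo[ s -> 0 <= w s.
  move=> s Ds; rewrite /w mulr_ge0 // divr_ge0 ?A0 ?hD //.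
  exact: ltW (Dpos s Ds).
have mw : measurable_fun `[2 * mu / 3, +oo[ w.
  apply: measurable_funM; first apply: measurable_funM => //.
  - apply: measurable_funS measurable_inv => //.
  - apply: measurableT_comp; first exact: normr_measurable.
    apply: measurable_funS (measurable_beta1 a) => //.
have iw : lebesgue_measure.-integrable `[2 * mu / 3, +oo[ (EFin \o w).
  apply/integrableP; split; first exact/measurable_EFinP.
  apply: le_lt_trans Aint; rewrite le_eqVlt; apply/orP; left; apply/eqP.
  apply: eq_integral => s; rewrite inE => Ds /=.
  by rewrite ger0_norm // w0.
pose W := Rintegral lebesgue_measure `[2 * mu / 3, +oo[ w.
have W0 : 0 < W.
  have W0' : 0 <= W by apply: Rintegral_ge0.
  rewrite lt_neqAle W0' andbT; apply/eqP => HW.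
  apply: Anz.
  have fin : (\int[lebesgue_measure]_(s in `[(2 * mu / 3)%R, +oo[) (EFin \o w) s)%E \is a fin_num.
    by apply: integrable_fin_num => //; exact: measurable_itv.
  have i0 : (\int[lebesgue_measure]_(s in `[(2 * mu / 3)%R, +oo[) `|(EFin \o w) s|)%E = 0.
    transitivity (\int[lebesgue_measure]_(s in `[(2 * mu / 3)%R, +oo[) (EFin \o w) s)%E.
      apply: eq_integral => s; rewrite inE => Ds /=; by rewrite ger0_norm // w0.
    rewrite -(fineK fin); congr (_%:E); exact: esym HW.
  have H := (@ae_eq_integral_abs _ _ _ lebesgue_measure _ (measurable_itv _) (EFin \o w)
     ltac:(apply/measurable_EFinP; exact: mw)).1 i0.
  apply: (filterS _ H) => s /= Hs Ds.
  have [hw] := Hs Ds.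
  move: hw; rewrite /w; move/eqP; rewrite !mulf_eq0 invr_eq0 normr_eq0.
  rewrite (gt_eqF (Dpos s Ds)) (lt_eqF (hb1 s Ds)) !orbF.
  by move/eqP.
have Hgen : forall x y : R, x ^+ 2 + y ^+ 2 < 1 ->
  [/\ lebesgue_measure.-integrable `[2 * mu / 3, +oo[
        (EFin \o (fun s => - w s * Uf x y (ccf a s))),
      lebesgue_measure.-integrable `[2 * mu / 3, +oo[
        (EFin \o (fun s => - w s * Vf x y (ccf a s))) &
      `|fnorm mu a alpha0 A (x +i* y)| =
        (Num.sqrt ((Rintegral lebesgue_measure `[2 * mu / 3, +oo[
                      (fun s => - w s * Uf x y (ccf a s))) ^+ 2
                 + (Rintegral lebesgue_measure `[2 * mu / 3, +oo[
                      (fun s => - w s * Vf x y (ccf a s))) ^+ 2) / W)%:C].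
  move=> x y hxy.
  set r := Num.sqrt (x ^+ 2 + y ^+ 2).
  have r0 : 0 <= r by exact: sqrtr_ge0.
  have rr : r ^+ 2 = x ^+ 2 + y ^+ 2 by rewrite sqr_sqrtr // addr_ge0 ?sqr_ge0.
  have r1 : r < 1 by nra.
  set m := r / (1 - r) ^+ 2.
  have m0 : 0 <= m by rewrite divr_ge0 // sqr_ge0.
  have hN : forall s, `[2 * mu / 3, +oo[ s -> Nf x y (ccf a s) != 0.
    move=> s Ds; rewrite gt_eqF //; apply: lt_le_trans (Nf_ge x y _ (hcc s Ds) hxy).
    by rewrite exprn_gt0 // subr_gt0.
  have huv : forall s, `[2 * mu / 3, +oo[ s ->
      Uf x y (ccf a s) ^+ 2 + Vf x y (ccf a s) ^+ 2 <= m ^+ 2.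
    by move=> s Ds; exact: UV_bound (hcc s Ds) hxy.
  have mU : measurable_fun `[2 * mu / 3, +oo[ (fun s => Uf x y (ccf a s)).
    apply: measurableT_comp; first exact: measurable_Uf.
    exact: measurable_funS (measurable_ccf a).
  have mV : measurable_fun `[2 * mu / 3, +oo[ (fun s => Vf x y (ccf a s)).
    apply: measurableT_comp; first exact: measurable_Vf.
    exact: measurable_funS (measurable_ccf a).
  have iU : lebesgue_measure.-integrable `[2 * mu / 3, +oo[
        (EFin \o (fun s => - w s * Uf x y (ccf a s))).
    apply: (le_integrable _ _ _ (iZ _ _ m iw)).
    - exact: measurable_itv.
    - apply/measurable_EFinP; apply: measurable_funM => //.
      exact: measurable_funN.
    - move=> s Ds /=; rewrite lee_fin normrM normrN (ger0_norm (w0 s Ds)).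
      rewrite (@ger0_norm _ (m * w s)); last exact: mulr_ge0 m0 (w0 s Ds).
      rewrite [m * _]mulrC.
      apply: ler_wpM2l; first exact: w0.
      apply: abs_le_sq => //.
      have := huv s Ds; have := sqr_ge0 (Vf x y (ccf a s)); lra.
  have iV : lebesgue_measure.-integrable `[2 * mu / 3, +oo[
        (EFin \o (fun s => - w s * Vf x y (ccf a s))).
    apply: (le_integrable _ _ _ (iZ _ _ m iw)).
    - exact: measurable_itv.
    - apply/measurable_EFinP; apply: measurable_funM => //.
      exact: measurable_funN.
    - move=> s Ds /=; rewrite lee_fin normrM normrN (ger0_norm (w0 s Ds)).
      rewrite (@ger0_norm _ (m * w s)); last exact: mulr_ge0 m0 (w0 s Ds).
      rewrite [m * _]mulrC.
      apply: ler_wpM2l; first exact: w0.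
      apply: abs_le_sq => //.
      have := huv s Ds; have := sqr_ge0 (Uf x y (ccf a s)); lra.
  split => //.
  set p := Rintegral lebesgue_measure `[2 * mu / 3, +oo[ (fun s => - w s * Uf x y (ccf a s)).
  set q := Rintegral lebesgue_measure `[2 * mu / 3, +oo[ (fun s => - w s * Vf x y (ccf a s)).
  have hF : forall s, `[2 * mu / 3, +oo[ s ->
      (A s / s)%:C * Hker s (x +i* y) a
      = (- w s * Uf x y (ccf a s)) +i* (- w s * Vf x y (ccf a s)).
    move=> s Ds; rewrite Hker_eq ?Dpos ?hN //.
    apply/eqP; rewrite eq_complex /= /w ltr0_norm ?hb1 //.
    by apply/andP; split; apply/eqP; ring.
  have hX : Cintegral `[2 * mu / 3, +oo[
      (fun s => (A s / s)%:C * Hker s (x +i* y) a) = p%:C + 'i * q%:C.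
    rewrite /Cintegral /p /q; congr (_%:C + 'i * _%:C); apply: eq_Rintegral => s;
      rewrite inE => Ds; by rewrite hF.
  have ha1 : alpha1a2 mu a A = - (pi^-1 * W).
    rewrite /alpha1a2 /W.
    rewrite (@eq_Rintegral _ _ _ lebesgue_measure _ (fun s => -1 * w s)); last first.
      move=> s; rewrite inE => Ds; rewrite /w ltr0_norm ?hb1 //; ring.
    by rewrite RintegralZl //; ring.
  have hf : fnorm mu a alpha0 A (x +i* y)
      = (pi^-1)%:C * (p%:C + 'i * q%:C) / (- (pi^-1 * W))%:C.
    by rewrite /fnorm /Tamp hX ha1 addrAC subrr add0r.
  rewrite hf normf_div normrM normC_pq !normC_real -rmorphM -fmorph_div.
  congr (_%:C).
  have pi0 : 0 < pi :> R by exact: pi_gt0.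
  rewrite normrN normrM !ger0_norm ?invr_ge0 ?ltW //.
  move: (pi : R) pi0 => P P0.
  by field; rewrite !gt_eqF.
have mD : forall s, `[2 * mu / 3, +oo[ s -> 0 <= w s := w0.
split.
- move=> [x y] hz.
  have hxy : x ^+ 2 + y ^+ 2 < 1.
    move: hz; rewrite normc_def ltcE /= => /andP[_ h].
    have r0 : 0 <= Num.sqrt (x ^+ 2 + y ^+ 2) by exact: sqrtr_ge0.
    have rr : Num.sqrt (x ^+ 2 + y ^+ 2) ^+ 2 = x ^+ 2 + y ^+ 2.
      by rewrite sqr_sqrtr // addr_ge0 ?sqr_ge0.
    nra.
  have [iU iV ->] := Hgen x y hxy.
  set p := Rintegral lebesgue_measure `[2 * mu / 3, +oo[ (fun s => - w s * Uf x y (ccf a s)).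
  set q := Rintegral lebesgue_measure `[2 * mu / 3, +oo[ (fun s => - w s * Vf x y (ccf a s)).
  set S := Num.sqrt (p ^+ 2 + q ^+ 2).
  rewrite normc_def /=.
  set r := Num.sqrt (x ^+ 2 + y ^+ 2).
  have r0 : 0 <= r by exact: sqrtr_ge0.
  have rr : r ^+ 2 = x ^+ 2 + y ^+ 2 by rewrite sqr_sqrtr // addr_ge0 ?sqr_ge0.
  have r1 : r < 1 by nra.
  set m := r / (1 - r) ^+ 2.
  have m0 : 0 <= m by rewrite divr_ge0 // sqr_ge0.
  have -> : r%:C / (1 - r%:C) ^+ 2 = m%:C :> R[i].
    by rewrite fmorph_div rmorphXn rmorphB rmorph1.
  rewrite lecR ler_pdivrMr //.
  have S0 : 0 <= S by exact: sqrtr_ge0.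
  have SS : S ^+ 2 = p ^+ 2 + q ^+ 2 by rewrite sqr_sqrtr // addr_ge0 ?sqr_ge0.
  have ip := iZ _ _ p iU; have iq := iZ _ _ q iV.
  have e1 : p ^+ 2 + q ^+ 2 = Rintegral lebesgue_measure `[2 * mu / 3, +oo[
      (fun s => p * (- w s * Uf x y (ccf a s)) + q * (- w s * Vf x y (ccf a s))).
    rewrite RintegralD //.
    by rewrite !RintegralZl // -/p -/q; ring.
  have e2 : Rintegral lebesgue_measure `[2 * mu / 3, +oo[
      (fun s => p * (- w s * Uf x y (ccf a s)) + q * (- w s * Vf x y (ccf a s)))
      <= Rintegral lebesgue_measure `[2 * mu / 3, +oo[ (fun s => S * m * w s).
    apply: le_Rintegral.
    - exact: measurable_itv.
    - exact: iDR.
    - exact: iZ.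
    - move=> s Ds; apply: pw_bound => //; first exact: w0.
      exact: UV_bound (hcc s Ds) hxy.
  have e3 : Rintegral lebesgue_measure `[2 * mu / 3, +oo[ (fun s => S * m * w s) = S * m * W.
    by rewrite RintegralZl.
  have mW : 0 <= m * W by rewrite mulr_ge0 // ltW.
  have : S ^+ 2 <= S * (m * W) by rewrite SS e1 mulrA -e3.
  nra.
- move=> t ht.
  have [t1 t2] : -1 < t /\ t < 1 by move: ht; rewrite ltr_norml => /andP[].
  have hxy : t ^+ 2 + 0 ^+ 2 < 1 by rewrite expr0n addr0; nra.
  have -> : fnorm mu a alpha0 A t%:C = fnorm mu a alpha0 A (t +i* 0) by [].
  have [iU iV ->] := Hgen t 0 hxy.
  set p := Rintegral lebesgue_measure `[2 * mu / 3, +oo[ (fun s => - w s * Uf t 0 (ccf a s)).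
  set q := Rintegral lebesgue_measure `[2 * mu / 3, +oo[ (fun s => - w s * Vf t 0 (ccf a s)).
  set S := Num.sqrt (p ^+ 2 + q ^+ 2).
  rewrite normC_real.
  set m := `|t| / (1 + `|t|) ^+ 2.
  have -> : `|t|%:C / (1 + `|t|%:C) ^+ 2 = m%:C :> R[i].
    by rewrite fmorph_div rmorphXn rmorphD rmorph1.
  rewrite lecR ler_pdivlMr //.
  have pS : `|p| <= S.
    rewrite /S -sqrtr_sqr; apply: ler_wsqrtr.
    have := sqr_ge0 q; lra.
  apply: le_trans pS.
  set e := (if 0 <= t then 1 else -1) : R.
  have e1 : - e * p <= `|p|.
    rewrite /e; case: (leP 0 t) => _.
    - by rewrite mulN1r -normrN ler_norm.
    - by rewrite opprK mul1r ler_norm.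
  apply: le_trans e1.
  have i1 : m * W = Rintegral lebesgue_measure `[2 * mu / 3, +oo[ (fun s => m * w s).
    by rewrite RintegralZl.
  have i2 : - e * p = Rintegral lebesgue_measure `[2 * mu / 3, +oo[
       (fun s => - e * (- w s * Uf t 0 (ccf a s))).
    by rewrite RintegralZl.
  rewrite i1 i2; apply: le_Rintegral.
  - exact: measurable_itv.
  - exact: iZ.
  - exact: iZ.
  - move=> s Ds.
    have := U_lower t (ccf a s) (hcc s Ds) ht.
    have := w0 s Ds.
    rewrite -/e -/m => h1 h2.
    have -> : - e * (- w s * Uf t 0 (ccf a s)) = w s * (e * Uf t 0 (ccf a s)) by ring.
    by rewrite [m * w s]mulrC; apply: ler_wpM2l.
Qed.
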